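(* Let $n\ge2$ and let $P$ be a $2n$-gon in the plane whose sides are alternately horizontal and vertical (axis aligned), in general enough position that $T(P)$ is defined. Then $T(P)$ is again axis aligned; more precisely, if the $k$-th side of $P$ is vertical (resp. horizontal) then the $k$-th side of $T(P)$ is horizontal (resp. vertical).
   Context: For a polygon with vertices $V_1,\dots,V_m$ (indices mod $m$) in $\mathbb{RP}^2$, the $k$-th side is $V_kV_{k+1}$, and its projective normal $n_k$ is the line through the point $(V_{k-1}V_{k+1})\cap(V_kV_{k+2})$ and the point $(V_{k-1}V_k)\cap(V_{k+1}V_{k+2})$. $T(P)$ is the polygon whose vertices are $n_1\cap n_2, n_2\cap n_3,\dots$, so that its $k$-th side lies on the line $n_k$. Parallel lines are regarded as meeting at the corresponding point at infinity. *)

(* Defs.v *)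
From HB Require Import structures.
From mathcomp Require Import all_boot all_order all_algebra.
Set Implicit Arguments. Unset Strict Implicit. Unset Printing Implicit Defensive.
Import Order.TTheory GRing.Theory Num.Theory.
Local Open Scope ring_scope.

(* Homogeneous coordinates on RP^2 over a real field R: a point or a line is a
   nonzero triple.  The line through
   two points, and the intersection point of two lines, are both given by the
   cross product; the result is the zero triple exactly when the two inputs are
   projectively equal (or one is zero), i.e. when the construction is undefined.
   Parallel affine lines meet at a point with last coordinate 0 (at infinity). *)

Definition hvec (R : nzRingType) := (R * R * R)%type.

Definition cross (R : nzRingType) (p q : hvec R) : hvec R :=
  let '(a, b, c) := p in let '(d, e, f) := q in
  (b * f - c * e, c * d - a * f, a * e - b * d).

Definition join (R : nzRingType) (p q : hvec R) : hvec R := cross p q.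
Definition meet (R : nzRingType) (l l' : hvec R) : hvec R := cross l l'.

Definition hnz (R : nzRingType) (p : hvec R) : bool := p != (0, 0, 0).

Definition hom (R : nzRingType) (v : R * R) : hvec R := (v.1, v.2, 1).

Definition finite_pt (R : nzRingType) (p : hvec R) : bool := p.2 != 0.

Definition xcoord (R : fieldType) (p : hvec R) : R := p.1.1 / p.2.
Definition ycoord (R : fieldType) (p : hvec R) : R := p.1.2 / p.2.

Section Polygon.
Variable R : fieldType.
Variable m : nat.
(* a polygon with m vertices V_0, ..., V_(m-1) in the affine plane; indices mod m *)
Variable V : 'I_m -> R * R.

Definition nx (i : 'I_m) : 'I_m := ordS i.
Definition pv (i : 'I_m) : 'I_m := ord_pred i.
Definition HV (i : 'I_m) : hvec R := hom (V i).

Definition Apt (k : 'I_m) : hvec R :=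
  meet (join (HV (pv k)) (HV (nx k))) (join (HV k) (HV (nx (nx k)))).
Definition Bpt (k : 'I_m) : hvec R :=
  meet (join (HV (pv k)) (HV k)) (join (HV (nx k)) (HV (nx (nx k)))).
(* projective normal of the k-th side V_k V_{k+1} *)
Definition pnormal (k : 'I_m) : hvec R := join (Apt k) (Bpt k).
(* k-th vertex of T(P): n_{k-1} ∩ n_k, so that its k-th side lies on n_k *)
Definition Tvtx (k : 'I_m) : hvec R := meet (pnormal (pv k)) (pnormal k).

Definition T_defined : Prop :=
  forall k : 'I_m,
    [/\ hnz (Apt k), hnz (Bpt k), hnz (pnormal k) &
        [/\ hnz (Tvtx k), finite_pt (Tvtx k) &
        hnz (join (Tvtx k) (Tvtx (nx k)))]].

Definition side_vertical (k : 'I_m) : Prop := (V k).1 = (V (nx k)).1.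
Definition side_horizontal (k : 'I_m) : Prop := (V k).2 = (V (nx k)).2.

Definition axis_aligned : Prop :=
  forall k : 'I_m,
    (side_vertical k /\ side_horizontal (nx k)) \/
    (side_horizontal k /\ side_vertical (nx k)).

Definition T_side_horizontal (k : 'I_m) : Prop :=
  ycoord (Tvtx k) = ycoord (Tvtx (nx k)).
Definition T_side_vertical (k : 'I_m) : Prop :=
  xcoord (Tvtx k) = xcoord (Tvtx (nx k)).

End Polygon.

(* Main.v *)
Require Import Defs.
From HB Require Import structures.
From mathcomp Require Import all_boot all_order all_algebra.
From mathcomp Require Import ring.
Import Order.TTheory GRing.Theory Num.Theory.
Local Open Scope ring_scope.

Lemma ycross_eq (R : fieldType) (P Q L : hvec R) :
  L.1.1 = 0 -> finite_pt (cross P L) -> finite_pt (cross L Q) ->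
  ycoord (cross P L) = ycoord (cross L Q).
Proof.
case: P => [[p1 p2] p3]; case: Q => [[q1 q2] q3]; case: L => [[a b] c] /= ->.
rewrite /finite_pt /ycoord /= => h1 h2.
have hb : b != 0 by apply: contraNneq h1 => ->; apply/eqP; ring.
have hp : p1 != 0 by apply: contraNneq h1 => ->; apply/eqP; ring.
have hq : q1 != 0 by apply: contraNneq h2 => ->; apply/eqP; ring.
field; by rewrite oppr_eq0 mulf_neq0 ?hb ?hp ?hq.
Qed.

Lemma xcross_eq (R : fieldType) (P Q L : hvec R) :
  L.1.2 = 0 -> finite_pt (cross P L) -> finite_pt (cross L Q) ->
  xcoord (cross P L) = xcoord (cross L Q).
Proof.
case: P => [[p1 p2] p3]; case: Q => [[q1 q2] q3]; case: L => [[a b] c] /= ->.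
rewrite /finite_pt /xcoord /= => h1 h2.
have ha : a != 0 by apply: contraNneq h1 => ->; apply/eqP; ring.
have hp : p2 != 0 by apply: contraNneq h1 => ->; apply/eqP; ring.
have hq : q2 != 0 by apply: contraNneq h2 => ->; apply/eqP; ring.
field; by rewrite oppr_eq0 mulf_neq0 ?ha ?hp ?hq.
Qed.

Section S.
Variable R : fieldType.
Variable m : nat.
Variable V : 'I_m -> R * R.

Lemma degen k : side_vertical V k -> side_horizontal V k -> ~~ hnz (pnormal V k).
Proof.
rewrite /side_vertical /side_horizontal => h1 h2.
have e : HV V k = HV V (nx k).
  by rewrite /HV /hom; move: h1 h2; case: (V k) => ? ?; case: (V (nx k)) => ? ? /= -> ->.
have eAB : Apt V k = Bpt V k by rewrite /Apt /Bpt e.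
rewrite /hnz /pnormal eAB negbK.
case: (Bpt V k) => [[a b] c].
rewrite /join /cross /=; apply/eqP; congr (_,_,_); ring.
Qed.

Lemma pnormal_vert k : side_horizontal V (pv k) -> side_vertical V k ->
  side_horizontal V (nx k) -> (pnormal V k).1.1 = 0.
Proof.
rewrite /side_vertical /side_horizontal /pnormal /Apt /Bpt /HV /hom.
have -> : nx (pv k) = k by rewrite /nx /pv ord_predK.
case: (V (pv k)) => x0 y0; case: (V k) => x1 y1; case: (V (nx k)) => x2 y2;
case: (V (nx (nx k))) => x3 y3 /= e1 e2 e3.
rewrite e1 e2 e3; ring.
Qed.

Lemma pnormal_hor k : side_vertical V (pv k) -> side_horizontal V k ->
  side_vertical V (nx k) -> (pnormal V k).1.2 = 0.
Proof.
rewrite /side_vertical /side_horizontal /pnormal /Apt /Bpt /HV /hom.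
have -> : nx (pv k) = k by rewrite /nx /pv ord_predK.
case: (V (pv k)) => x0 y0; case: (V k) => x1 y1; case: (V (nx k)) => x2 y2;
case: (V (nx (nx k))) => x3 y3 /= e1 e2 e3.
rewrite e1 e2 e3; ring.
Qed.

End S.

Theorem mainTheorem11 (R : realFieldType) (n : nat) (V : 'I_(2 * n) -> R * R) :
  (2 <= n)%N ->
  axis_aligned V ->
  T_defined V ->
  forall k : 'I_(2 * n),
    (side_vertical V k -> T_side_horizontal V k) /\
    (side_horizontal V k -> T_side_vertical V k).
Proof.
move=> _ hax hT k.
have hnk := hT k; have hnn := hT (nx k).
case: hnk => _ _ hpn [_ hf1 _]; case: hnn => _ _ _ [_ hf2 _].
have epv : pv (nx k) = k by rewrite /nx /pv ordSK.
have hpk : nx (pv k) = k by rewrite /nx /pv ord_predK.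
have nd : ~ (side_vertical V k /\ side_horizontal V k).
  by case=> a b; move: hpn; rewrite (negbTE (degen _ _ _ _ a b)).
have nd' : ~ (side_vertical V (pv k) /\ side_horizontal V (pv k)).
  case=> a b; case: (hT (pv k)) => _ _ h _; by move: h; rewrite (negbTE (degen _ _ _ _ a b)).
split => hs.
- have h2 : side_horizontal V (nx k).
    case: (hax k) => [[] //|[a _]]; by exfalso; apply: nd.
  have h0 : side_horizontal V (pv k).
    case: (hax (pv k)) => [[a b]|[a _] //]; rewrite hpk in b; by exfalso; apply: nd.
  rewrite /T_side_horizontal /Tvtx epv.
  apply: ycross_eq; [exact: pnormal_vert | by move: hf1; rewrite /Tvtx |].
  by move: hf2; rewrite /Tvtx epv.
- have h2 : side_vertical V (nx k).
    case: (hax k) => [[a _]|[] //]; by exfalso; apply: nd.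
  have h0 : side_vertical V (pv k).
    case: (hax (pv k)) => [[a _] //|[a b]]; rewrite hpk in b; by exfalso; apply: nd.
  rewrite /T_side_vertical /Tvtx epv.
  apply: xcross_eq; [exact: pnormal_hor | by move: hf1; rewrite /Tvtx |].
  by move: hf2; rewrite /Tvtx epv.
Qed.
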